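(* The geometric standard strongly integral super-packing is invariant under the translations $(x,y)\mapsto(x+2,y)$ and $(x,y)\mapsto(x,y+2)$ and under the reflections $(x,y)\mapsto(-x,y)$ and $(x,y)\mapsto(x,-y)$. The crystallographic group generated by these four motions is the complete group of Euclidean motions of the plane leaving the geometric standard strongly integral super-packing invariant.
   Context: Circles are taken in $\hat{\mathbb C}=\mathbb R^2\cup\{\infty\}$; lines count as circles. A Descartes configuration is a set of four mutually tangent circles with disjoint interiors; an ordered, oriented one carries an ordering and total orientation, with signed curvatures (reciprocal radius, negative if the interior is unbounded, $0$ for lines). Its augmented curvature-center coordinate matrix $W_{\mathcal D}$ has $i$-th row $(\bar b_i,b_i,b_ix_i,b_iy_i)$ with $(x_i,y_i)$ the center and $\bar b_i=b_i(x_i^2+y_i^2)-1/b_i$ (for a line: $(2p\cdot n,0,n_x,n_y)$, $n$ the unit normal pointing into the interior half-plane, $p$ a point of the line); it determines $\mathcal D$. Let $S_i$ be the $4\times4$ integer matrix equal to the identity except that row $i$ has $-1$ in position $i$ and $2$ elsewhere, $S_i^\perp=S_i^T$, and $\mathcal A^S=\langle S_i,S_i^\perp\rangle$ the super-Apollonian group, acting by $W_{U[\mathcal D]}=UW_{\mathcal D}$. The geometric super-packing generated by $\mathcal D$ is the set of all circles of configurations in $\mathcal A^S[\mathcal D]$. The standard strongly integral super-packing is the one generated by the configuration $\mathcal D_1$ with $W_{\mathcal D_1}=\begin{pmatrix}2&0&0&1\\2&0&0&-1\\0&1&1&0\\0&1&-1&0\end{pmatrix}$, i.e. the lines $y=1$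 and $y=-1$ and the circles of radius $1$ centered at $(1,0)$ and $(-1,0)$. *)

(* Defs.v *)
From HB Require Import structures.
From mathcomp Require Import all_boot all_order all_algebra.
From mathcomp Require Import boolp classical_sets reals.
Set Implicit Arguments. Unset Strict Implicit. Unset Printing Implicit Defensive.
Import Order.TTheory GRing.Theory Num.Theory.
Local Open Scope ring_scope.
Local Open Scope classical_set_scope.

Definition sqdist {R : realType} (p q : R * R) : R :=
  (p.1 - q.1) ^+ 2 + (p.2 - q.2) ^+ 2.

Definition euclidean_motion {R : realType} (f : R * R -> R * R) : Prop :=
  forall p q, sqdist (f p) (f q) = sqdist p q.

(* Row (bbar, b, b x, b y) of an augmented curvature-center coordinate matrix
   and the geometric circle (point set in R^2) it describes:
   b <> 0 : circle with center (bx/b, by/b), radius 1/|b|;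
   b = 0  : line {q | n . q = p . n} where n = (bx,by), bbar = 2 p . n. *)
Definition circle_of_row {R : realType} (w : 'rV[R]_4) : set (R * R) :=
  let bbar := w ord0 (inord 0) in
  let b := w ord0 (inord 1) in
  let bx := w ord0 (inord 2) in
  let by_ := w ord0 (inord 3) in
  if b != 0 then
    [set q | (q.1 - bx / b) ^+ 2 + (q.2 - by_ / b) ^+ 2 = (b^-1) ^+ 2]
  else [set q | bx * q.1 + by_ * q.2 = bbar / 2].

Definition Smx {R : realType} (i : 'I_4) : 'M[R]_4 :=
  \matrix_(r, c) (if r == i then (if c == i then -1 else 2) else (r == c)%:R).

Inductive superApollonian {R : realType} : 'M[R]_4 -> Prop :=
| sA_one : superApollonian 1%:M
| sA_S i U : superApollonian U -> superApollonian (Smx i *m U)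
| sA_Sinv i U : superApollonian U -> superApollonian (invmx (Smx i) *m U)
| sA_ST i U : superApollonian U -> superApollonian ((Smx i)^T *m U)
| sA_STinv i U : superApollonian U -> superApollonian (invmx ((Smx i)^T) *m U).

Definition W1_entries : seq (seq int) :=
  [:: [:: 2%:Z; 0; 0; 1];
      [:: 2%:Z; 0; 0; -1];
      [:: 0%:Z; 1; 1; 0];
      [:: 0%:Z; 1; -1; 0]].

(* W_{D_1}: the lines y = 1, y = -1 and unit circles centered at (1,0), (-1,0). *)
Definition W1 {R : realType} : 'M[R]_4 :=
  \matrix_(i, j) ((nth [::] W1_entries i)`_j)%:~R.

(* The geometric standard strongly integral super-packing: all circles of
   all configurations U[D_1], U in A^S  (W_{U[D_1]} = U W_{D_1}). *)
Definition std_superpacking {R : realType} : set (set (R * R)) :=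
  [set C | exists (U : 'M[R]_4) (i : 'I_4),
      superApollonian U /\ C = circle_of_row (row i (U *m W1))].

Definition leaves_invariant {R : realType} (f : R * R -> R * R) : Prop :=
  [set f @` C | C in (@std_superpacking R)] = std_superpacking.

Definition trans_x {R : realType} (p : R * R) : R * R := (p.1 + 2, p.2).
Definition trans_y {R : realType} (p : R * R) : R * R := (p.1, p.2 + 2).
Definition refl_x {R : realType} (p : R * R) : R * R := (- p.1, p.2).
Definition refl_y {R : realType} (p : R * R) : R * R := (p.1, - p.2).
Definition trans_x_inv {R : realType} (p : R * R) : R * R := (p.1 - 2, p.2).
Definition trans_y_inv {R : realType} (p : R * R) : R * R := (p.1, p.2 - 2).

(* Generators and their inverses (reflections are involutions). *)
Definition motion_gen {R : realType} (g : R * R -> R * R) : Prop :=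
  g = trans_x \/ g = trans_y \/ g = refl_x \/ g = refl_y \/
  g = trans_x_inv \/ g = trans_y_inv.

Inductive motion_group {R : realType} : (R * R -> R * R) -> Prop :=
| mg_id : motion_group id
| mg_gen g h : motion_gen g -> motion_group h -> motion_group (g \o h).

(* Main.v *)
Require Import Defs.
From HB Require Import structures.
From mathcomp Require Import all_boot all_order all_algebra all_fingroup.
From mathcomp Require Import boolp classical_sets reals ring lra zify.
Set Implicit Arguments. Unset Strict Implicit. Unset Printing Implicit Defensive.
Import Order.TTheory GRing.Theory Num.Theory.
Local Open Scope ring_scope.
Local Open Scope classical_set_scope.

Section Mx.
Variable R : realType.
Implicit Types U V : 'M[R]_4.

Definition o0 : 'I_4 := Ordinal (erefl : (0 < 4)%N).
Definition o1 : 'I_4 := Ordinal (erefl : (1 < 4)%N).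
Definition o2 : 'I_4 := Ordinal (erefl : (2 < 4)%N).
Definition o3 : 'I_4 := Ordinal (erefl : (3 < 4)%N).
Lemma io0 : (inord 0 : 'I_4) = o0. Proof. by apply/val_inj; rewrite /= inordK. Qed.
Lemma io1 : (inord 1 : 'I_4) = o1. Proof. by apply/val_inj; rewrite /= inordK. Qed.
Lemma io2 : (inord 2 : 'I_4) = o2. Proof. by apply/val_inj; rewrite /= inordK. Qed.
Lemma io3 : (inord 3 : 'I_4) = o3. Proof. by apply/val_inj; rewrite /= inordK. Qed.

Lemma Smx_invol (i : 'I_4) : (Smx i : 'M[R]_4) *m Smx i = 1%:M.
Proof.
apply/matrixP => r c; rewrite !mxE !big_ord_recr big_ord0 /= !mxE.
case: i r c => [[|[|[|[|i]]]] Hi] [[|[|[|[|r]]]] Hr] [[|[|[|[|c]]]] Hc] //=.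
all: rewrite /=; ring.
Qed.

Lemma inv_invol (A : 'M[R]_4) : A *m A = 1%:M -> invmx A = A.
Proof.
move=> AA; have [Au _] := mulmx1_unit AA.
by rewrite -[LHS]mulmx1 -AA mulmxA mulVmx // mul1mx.
Qed.

Lemma invS i : invmx (Smx i : 'M[R]_4) = Smx i.
Proof. exact/inv_invol/Smx_invol. Qed.
Lemma invST i : invmx (Smx i : 'M[R]_4)^T = (Smx i)^T.
Proof. by apply/inv_invol; rewrite -trmx_mul Smx_invol trmx1. Qed.

Lemma sA_mul U V : superApollonian U -> superApollonian V -> superApollonian (U *m V).
Proof.
elim=> [|i W _ IH|i W _ IH|i W _ IH|i W _ IH] HV; first by rewrite mul1mx.
all: rewrite -mulmxA; constructor; exact: IH.
Qed.

Lemma sA_S' i U : superApollonian U -> superApollonian (Smx i *m U).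
Proof. exact: sA_S. Qed.
Lemma sA_ST' i U : superApollonian U -> superApollonian ((Smx i)^T *m U).
Proof. exact: sA_ST. Qed.

Definition cnj (s : 'S_4) U := perm_mx s *m U *m perm_mx (s^-1)%g.
Lemma cnjE s U r c : cnj s U r c = U (s r) (s c).
Proof. by rewrite /cnj -row_permE -col_permE !mxE. Qed.
Lemma cnj_mul s U V : cnj s (U *m V) = cnj s U *m cnj s V.
Proof.
rewrite /cnj !mulmxA -[perm_mx s *m U *m perm_mx (s^-1)%g *m perm_mx s]mulmxA.
by rewrite -perm_mxM mulVg perm_mx1 mulmx1.
Qed.
Lemma cnj1 s : cnj s 1%:M = 1%:M.
Proof. by rewrite /cnj mulmx1 -perm_mxM mulgV perm_mx1. Qed.
Lemma cnjS s i : cnj s (Smx i) = Smx ((s^-1)%g i).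
Proof.
apply/matrixP => r c; rewrite cnjE !mxE.
have E x : (s x == i) = (x == (s^-1)%g i) by rewrite -{1}(permKV s i) (inj_eq perm_inj).
by rewrite !E (inj_eq perm_inj).
Qed.
Lemma cnjST s i : cnj s (Smx i)^T = (Smx ((s^-1)%g i))^T.
Proof.
apply/matrixP => r c; rewrite cnjE !mxE.
have E x : (s x == i) = (x == (s^-1)%g i) by rewrite -{1}(permKV s i) (inj_eq perm_inj).
by rewrite !E (inj_eq perm_inj).
Qed.
Lemma sA_cnj s U : superApollonian U -> superApollonian (cnj s U).
Proof.
elim=> [|i W _ IH|i W _ IH|i W _ IH|i W _ IH]; first by rewrite cnj1; constructor.
- by rewrite cnj_mul cnjS; apply: sA_S.
- by rewrite invS cnj_mul cnjS; apply: sA_S.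
- by rewrite cnj_mul cnjST; apply: sA_ST.
- by rewrite invST cnj_mul cnjST; apply: sA_ST.
Qed.

Definition Good U := exists V : 'M[R]_4, (forall i j, V i j \is a Num.int) /\ U = 1%:M + 2%:R *: V.
Lemma Good1 : Good 1%:M.
Proof. exists 0; split; [by move=> i j; rewrite mxE | by rewrite scaler0 addr0]. Qed.
Lemma Good_mul U V : Good U -> Good V -> Good (U *m V).
Proof.
move=> [A [Ai ->]] [B [Bi ->]].
exists (A + B + 2%:R *: (A *m B)); split.
  move=> i j; rewrite !mxE; apply: rpredD; first by apply: rpredD.
  apply: rpredM; first exact: rpred_nat.
  by apply: rpred_sum => k _; apply: rpredM.
rewrite !(mulmxDl, mulmxDr, mul1mx, mulmx1) -!scalemxAl -!scalemxAr.
by apply/matrixP => i j; rewrite !mxE; ring.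
Qed.
Lemma Good_S i : Good (Smx i).
Proof.
exists (\matrix_(r, c) (if r == i then (if c == i then -1 else 1) else 0)); split.
  by move=> r c; rewrite mxE; case: ifP => _; [case: ifP => _|]; rewrite ?rpredN ?rpred1 ?rpred0.
apply/matrixP => r c; rewrite !mxE.
case: (eqVneq r i) => [?|ri]; case: (eqVneq c i) => [?|ci]; subst; rewrite ?eqxx /=.
- ring.
- by rewrite eq_sym (negbTE ci) /=; ring.
- by rewrite (negbTE ri); ring.
- by rewrite mulr0 addr0.
Qed.
Lemma Good_tr U : Good U -> Good U^T.
Proof.
move=> [A [Ai ->]]; exists A^T; split; first by move=> i j; rewrite mxE.
by rewrite linearD /= trmx1 linearZ.
Qed.
Lemma sA_Good U : superApollonian U -> Good U.
Proof.
elim=> [|i W _ IH|i W _ IH|i W _ IH|i W _ IH]; first exact: Good1.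
all: rewrite ?invS ?invST; apply: Good_mul => //; first [exact: Good_S | exact/Good_tr/Good_S].
Qed.
End Mx.

Section Par.
Variable R : realType.
Lemma entry_int U i j : @superApollonian R U ->
  exists n : int, (U *m W1) i j = W1 i j + 2 * n%:~R.
Proof.
move/sA_Good => [V [Vi ->]].
have : (V *m W1) i j \is a Num.int.
  rewrite mxE; apply: rpred_sum => k _; apply: rpredM => //.
  by rewrite mxE intr_int.
move/intrP => [n Hn]; exists n.
have -> : (1%:M + 2%:R *: V) *m W1 = W1 + 2%:R *: (V *m W1) by rewrite mulmxDl mul1mx scalemxAl.
by rewrite !mxE -Hn !mxE.
Qed.

Definition Par (w : 'rV[R]_4) :=
  (exists z1 z2 z3 : int, w ord0 o1 = (2*z1)%:~R /\ w ord0 o2 = (2*z2)%:~R /\ w ord0 o3 = (2*z3+1)%:~R) \/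
  (exists z1 z2 z3 : int, w ord0 o1 = (2*z1+1)%:~R /\ w ord0 o2 = (2*z2+1)%:~R /\ w ord0 o3 = (2*z3)%:~R).

Lemma row_par U i : superApollonian U -> Par (row i (U *m W1)).
Proof.
move=> HU; have E j : row i (U *m W1) ord0 j = (U *m W1) i j by rewrite mxE.
rewrite /Par !E.
have [n1 ->] := entry_int i o1 HU; have [n2 ->] := entry_int i o2 HU.
have [n3 ->] := entry_int i o3 HU.
clear E; case: i => [[|[|[|[|i]]]] Hi] //; rewrite !mxE /=.
- left; exists n1, n2, n3; rewrite !(intrD, intrM); split; [|split]; ring.
- left; exists n1, n2, (n3 - 1); rewrite !(intrD, intrM, intrB); split; [|split]; ring.
- right; exists n1, n2, n3; rewrite !(intrD, intrM); split; [|split]; ring.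
- right; exists n1, (n2 - 1), n3; rewrite !(intrD, intrM, intrB); split; [|split]; ring.
Qed.
End Par.

Section Geo.
Variable R : realType.
Definition mkmx (s : seq (seq int)) : 'M[R]_4 := \matrix_(i,j) ((nth [::] s i)`_j)%:~R.
Definition Mtx := mkmx [:: [:: 1; 0; 0; 0]; [:: 4; 1; 2; 0]; [:: 4; 0; 1; 0]; [:: 0; 0; 0; 1]].
Definition Mty := mkmx [:: [:: 1; 0; 0; 0]; [:: 4; 1; 0; 2]; [:: 0; 0; 1; 0]; [:: 4; 0; 0; 1]].
Definition Mrx := mkmx [:: [:: 1; 0; 0; 0]; [:: 0; 1; 0; 0]; [:: 0; 0; -1; 0]; [:: 0; 0; 0; 1]].
Definition Mry := mkmx [:: [:: 1; 0; 0; 0]; [:: 0; 1; 0; 0]; [:: 0; 0; 1; 0]; [:: 0; 0; 0; -1]].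

Ltac bash := apply/matrixP; case=> [[|[|[|[|?]]]] ?] //; case=> [[|[|[|[|?]]]] ?] //;
  rewrite !mxE ?big_ord_recr ?big_ord0 /= ?permE /= ?mxE /=.

Lemma tx_id : W1 *m Mtx = row_perm (tperm o2 o3) (Smx o3 *m W1).
Proof. bash; ring. Qed.
Lemma ty_id : W1 *m Mty = row_perm (tperm o0 o1) ((Smx o0)^T *m W1).
Proof. bash; ring. Qed.
Lemma rx_id : W1 *m Mrx = row_perm (tperm o2 o3) (1%:M *m W1).
Proof. bash; ring. Qed.
Lemma ry_id : W1 *m Mry = row_perm (tperm o0 o1) (1%:M *m W1).
Proof. bash; ring. Qed.
End Geo.
Arguments Mtx {R}. Arguments Mty {R}. Arguments Mrx {R}. Arguments Mry {R}.

Section Geo2.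
Variable R : realType.
Implicit Types w : 'rV[R]_4.

Lemma sum4 (F : 'I_4 -> R) : \sum_i F i = F o0 + F o1 + F o2 + F o3.
Proof.
rewrite !big_ord_recr big_ord0 /= add0r.
by congr (_ + _ + _ + _); congr F; apply: val_inj.
Qed.

Lemma cor_def w : circle_of_row w =
  if w ord0 o1 != 0 then
    [set q | (q.1 - w ord0 o2 / w ord0 o1) ^+ 2 + (q.2 - w ord0 o3 / w ord0 o1) ^+ 2
       = (w ord0 o1)^-1 ^+ 2]
  else [set q | w ord0 o2 * q.1 + w ord0 o3 * q.2 = w ord0 o0 / 2].
Proof. by rewrite /circle_of_row io0 io1 io2 io3. Qed.

Lemma image_bij (f g : R * R -> R * R) (A : set (R * R)) :
  cancel g f -> cancel f g -> f @` A = [set q | A (g q)].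
Proof.
move=> gK fK; apply/seteqP; split => [q [p Ap <-]|q Agq] /=; first by rewrite fK.
by exists (g q) => //; rewrite gK.
Qed.

Lemma cor_tx w : trans_x @` circle_of_row w = circle_of_row (w *m Mtx).
Proof.
rewrite (@image_bij _ trans_x_inv); last 2 first.
- by case=> x y; rewrite /trans_x /trans_x_inv /=; congr pair; ring.
- by case=> x y; rewrite /trans_x /trans_x_inv /=; congr pair; ring.
have E k : (w *m Mtx) ord0 k = \sum_j w ord0 j * Mtx j k by rewrite mxE.
rewrite !cor_def !E !sum4 !mxE /=.
set b0 := w ord0 o0; set b1 := w ord0 o1; set b2 := w ord0 o2; set b3 := w ord0 o3.
have -> : b0 * 1%:~R + b1 * 4%:~R + b2 * 4%:~R + b3 * 0%:~R = b0 + 4 * b1 + 4 * b2 by ring.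
have -> : b0 * 0%:~R + b1 * 1%:~R + b2 * 0%:~R + b3 * 0%:~R = b1 by ring.
have -> : b0 * 0%:~R + b1 * 2%:~R + b2 * 1%:~R + b3 * 0%:~R = 2 * b1 + b2 by ring.
have -> : b0 * 0%:~R + b1 * 0%:~R + b2 * 0%:~R + b3 * 1%:~R = b3 by ring.
case: ifP => hb; apply: funext => q /=.
  have -> : q.1 - 2 - b2 / b1 = q.1 - (2 * b1 + b2) / b1 by field; rewrite hb.
  done.
move/negbFE/eqP: hb => ->; apply: propext; split => H; lra.
Qed.

Lemma cor_ty w : trans_y @` circle_of_row w = circle_of_row (w *m Mty).
Proof.
rewrite (@image_bij _ trans_y_inv); last 2 first.
- by case=> x y; rewrite /trans_y /trans_y_inv /=; congr pair; ring.
- by case=> x y; rewrite /trans_y /trans_y_inv /=; congr pair; ring.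
have E k : (w *m Mty) ord0 k = \sum_j w ord0 j * Mty j k by rewrite mxE.
rewrite !cor_def !E !sum4 !mxE /=.
set b0 := w ord0 o0; set b1 := w ord0 o1; set b2 := w ord0 o2; set b3 := w ord0 o3.
have -> : b0 * 0%:~R + b1 * 1%:~R + b2 * 0%:~R + b3 * 0%:~R = b1 by ring.
case: ifP => hb; apply: funext => q /=.
  by congr (_ = _); field; rewrite hb.
move/negbFE/eqP: hb => hb0; rewrite hb0; apply: propext; split => H; lra.
Qed.

Lemma cor_rx w : refl_x @` circle_of_row w = circle_of_row (w *m Mrx).
Proof.
rewrite (@image_bij _ refl_x); last 2 first.
- by case=> x y; rewrite /refl_x /refl_x /=; congr pair; ring.
- by case=> x y; rewrite /refl_x /refl_x /=; congr pair; ring.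
have E k : (w *m Mrx) ord0 k = \sum_j w ord0 j * Mrx j k by rewrite mxE.
rewrite !cor_def !E !sum4 !mxE /=.
set b0 := w ord0 o0; set b1 := w ord0 o1; set b2 := w ord0 o2; set b3 := w ord0 o3.
have -> : b0 * 0%:~R + b1 * 1%:~R + b2 * 0%:~R + b3 * 0%:~R = b1 by ring.
case: ifP => hb; apply: funext => q /=.
  by congr (_ = _); field; rewrite hb.
move/negbFE/eqP: hb => hb0; rewrite hb0; apply: propext; split => H; lra.
Qed.

Lemma cor_ry w : refl_y @` circle_of_row w = circle_of_row (w *m Mry).
Proof.
rewrite (@image_bij _ refl_y); last 2 first.
- by case=> x y; rewrite /refl_y /refl_y /=; congr pair; ring.
- by case=> x y; rewrite /refl_y /refl_y /=; congr pair; ring.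
have E k : (w *m Mry) ord0 k = \sum_j w ord0 j * Mry j k by rewrite mxE.
rewrite !cor_def !E !sum4 !mxE /=.
set b0 := w ord0 o0; set b1 := w ord0 o1; set b2 := w ord0 o2; set b3 := w ord0 o3.
have -> : b0 * 0%:~R + b1 * 1%:~R + b2 * 0%:~R + b3 * 0%:~R = b1 by ring.
case: ifP => hb; apply: funext => q /=.
  by congr (_ = _); field; rewrite hb.
move/negbFE/eqP: hb => hb0; rewrite hb0; apply: propext; split => H; lra.
Qed.
End Geo2.

Section Inv.
Variable R : realType.
Local Notation P := (@std_superpacking R).
Definition maps_into (g : R * R -> R * R) := forall C, P C -> P (g @` C).

Lemma mi_motion g (M : 'M[R]_4) (s : 'S_4) (X : 'M[R]_4) :
  (forall w, g @` circle_of_row w = circle_of_row (w *m M)) ->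
  W1 *m M = row_perm s (X *m W1) -> superApollonian X -> maps_into g.
Proof.
move=> Hg HW HX C [U [i [HU ->]]].
rewrite Hg -row_mul -mulmxA HW row_permE.
have -> : U *m (perm_mx s *m (X *m W1)) = perm_mx s *m (cnj (s^-1)%g U *m X *m W1).
  by rewrite /cnj invgK !mulmxA -perm_mxM mulgV perm_mx1 mul1mx.
exists (cnj (s^-1)%g U *m X), (s i); split; first by apply: sA_mul => //; apply: sA_cnj.
rewrite -mulmxA -row_permE; congr circle_of_row; apply/rowP => j; rewrite !mxE.
by rewrite ?mulmxA.
Qed.

Lemma sA_Smx i : superApollonian (Smx i : 'M[R]_4).
Proof. by rewrite -[Smx _]mulmx1; apply: sA_S; constructor. Qed.
Lemma sA_SmxT i : superApollonian ((Smx i)^T : 'M[R]_4).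
Proof. by rewrite -[_^T]mulmx1; apply: sA_ST; constructor. Qed.

Lemma mi_tx : maps_into trans_x.
Proof. exact: (mi_motion (@cor_tx R) (tx_id R) (sA_Smx _)). Qed.
Lemma mi_ty : maps_into trans_y.
Proof. exact: (mi_motion (@cor_ty R) (ty_id R) (sA_SmxT _)). Qed.
Lemma mi_rx : maps_into refl_x.
Proof. exact: (mi_motion (@cor_rx R) (rx_id R) sA_one). Qed.
Lemma mi_ry : maps_into refl_y.
Proof. exact: (mi_motion (@cor_ry R) (ry_id R) sA_one). Qed.

Lemma mi_comp g h : maps_into g -> maps_into h -> maps_into (g \o h).
Proof. by move=> Hg Hh C PC; rewrite -image_comp; apply/Hg/Hh. Qed.

Lemma txinv_eq : (@trans_x_inv R) = refl_x \o trans_x \o refl_x.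
Proof. by apply: funext => -[x y]; rewrite /trans_x_inv /refl_x /trans_x /=; congr pair; ring. Qed.
Lemma tyinv_eq : (@trans_y_inv R) = refl_y \o trans_y \o refl_y.
Proof. by apply: funext => -[x y]; rewrite /trans_y_inv /refl_y /trans_y /=; congr pair; ring. Qed.
Lemma mi_txi : maps_into trans_x_inv.
Proof. by rewrite txinv_eq; apply: mi_comp; [apply: mi_comp|]; [exact: mi_rx|exact: mi_tx|exact: mi_rx]. Qed.
Lemma mi_tyi : maps_into trans_y_inv.
Proof. by rewrite tyinv_eq; apply: mi_comp; [apply: mi_comp|]; [exact: mi_ry|exact: mi_ty|exact: mi_ry]. Qed.

Lemma li_of g gi : maps_into g -> maps_into gi -> cancel gi g -> leaves_invariant g.
Proof.
move=> Hg Hgi K; rewrite /leaves_invariant; apply/seteqP; split => [D [C PC <-]|D PD].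
  exact: Hg.
exists (gi @` D); first exact: Hgi.
rewrite image_comp; have -> : g \o gi = id by apply: funext => x; exact: K.
exact: image_id.
Qed.

Lemma li_comp (g h : R * R -> R * R) : leaves_invariant g -> leaves_invariant h -> leaves_invariant (g \o h).
Proof.
move=> Hg Hh; rewrite /leaves_invariant.
have -> : [set (g \o h) @` C | C in P] = [set g @` D | D in [set h @` C | C in P]].
  by rewrite image_comp; congr image; apply: funext => C /=; rewrite image_comp.
by rewrite Hh Hg.
Qed.

Lemma li_id : leaves_invariant (@id (R * R)).
Proof.
rewrite /leaves_invariant.
have -> : [set id @` C | C in P] = [set C | C in P].
  by congr image; apply: funext => C /=; rewrite image_id.
exact: image_id.
Qed.

Lemma li_gen (g : R * R -> R * R) : motion_gen g -> leaves_invariant g.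
Proof.
case=> [->|[->|[->|[->|[->|->]]]]].
- by apply: (li_of mi_tx mi_txi) => -[x y]; rewrite /trans_x /trans_x_inv /=; congr pair; ring.
- by apply: (li_of mi_ty mi_tyi) => -[x y]; rewrite /trans_y /trans_y_inv /=; congr pair; ring.
- by apply: (li_of mi_rx mi_rx) => -[x y]; rewrite /refl_x /=; congr pair; ring.
- by apply: (li_of mi_ry mi_ry) => -[x y]; rewrite /refl_y /=; congr pair; ring.
- by apply: (li_of mi_txi mi_tx) => -[x y]; rewrite /trans_x /trans_x_inv /=; congr pair; ring.
- by apply: (li_of mi_tyi mi_ty) => -[x y]; rewrite /trans_y /trans_y_inv /=; congr pair; ring.
Qed.

Lemma li_group (f : R * R -> R * R) : motion_group f -> leaves_invariant f.
Proof. elim=> [|g h Hg _ IH]; [exact: li_id | exact: li_comp (li_gen Hg) IH]. Qed.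
End Inv.

Section Nec.
Variable R : realType.
Local Notation P := (@std_superpacking R).

Lemma int_cases (p q p' q' : int) : p * p + q * q = 1 -> p' * p' + q' * q' = 1 ->
  (p' - p) * (p' - p) + (q' - q) * (q' - q) = 2 ->
  (q = 0 /\ p' = 0 /\ (p = 1 \/ p = -1) /\ (q' = 1 \/ q' = -1)) \/
  (p = 0 /\ q' = 0 /\ (q = 1 \/ q = -1) /\ (p' = 1 \/ p' = -1)).
Proof. nia. Qed.

Lemma sq1 (n : int) : (n%:~R : R) ^+ 2 = 1 -> n * n = 1.
Proof. by move=> h; apply: (@intr_inj R); rewrite intrM -expr2 h. Qed.

Lemma intr_neq0 (n : int) : n <> 0 -> (n%:~R : R) != 0.
Proof. by move=> h; rewrite intr_eq0; apply/eqP. Qed.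

Lemma center_L (w : 'rV[R]_4) (m1 m2 a1 a2 b1 b2 : R) : Par w ->
  a1^+2 + a2^+2 = 1 -> b1^+2 + b2^+2 = 1 -> a1*b1 + a2*b2 = 0 ->
  circle_of_row w (m1+a1, m2+a2) -> circle_of_row w (m1-a1, m2-a2) ->
  circle_of_row w (m1+b1, m2+b2) -> circle_of_row w (m1-b1, m2-b2) ->
  exists a b : int, m1 = (2*a+1)%:~R /\ m2 = (2*b)%:~R.
Proof.
move=> Hp na nb ab.
have det : (a1*b2 - a2*b1)^+2 = 1.
  rewrite (_ : _ ^+ 2 = (a1^+2 + a2^+2)*(b1^+2+b2^+2) - (a1*b1+a2*b2)^+2); last by ring.
  by rewrite na nb ab; ring.
have detn : a1*b2 - a2*b1 != 0 by apply/eqP => h; move: det; rewrite h; lra.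
rewrite cor_def; move: Hp; rewrite /Par.
set w0 := w ord0 o0; set w1 := w ord0 o1; set w2 := w ord0 o2; set w3 := w ord0 o3.
case: ifP => hb Hp /= H1 H2 H3 H4.
- have ad : a1*(m1 - w2/w1) + a2*(m2 - w3/w1) = 0 by lra.
  have bd : b1*(m1 - w2/w1) + b2*(m2 - w3/w1) = 0 by lra.
  have d1 : m1 - w2/w1 = 0.
    have h : (m1 - w2/w1) * (a1*b2 - a2*b1) = 0.
      rewrite (_ : _ * _ = b2*(a1*(m1 - w2/w1) + a2*(m2 - w3/w1)) - a2 * (b1*(m1 - w2/w1) + b2*(m2 - w3/w1))); last by ring.
      by rewrite ad bd; ring.
    by move/eqP: h; rewrite mulf_eq0 (negbTE detn) orbF => /eqP.
  have d2 : m2 - w3/w1 = 0.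
    have h : (m2 - w3/w1) * (a1*b2 - a2*b1) = 0.
      rewrite (_ : _ * _ = a1*(b1*(m1 - w2/w1) + b2*(m2 - w3/w1)) - b1 * (a1*(m1 - w2/w1) + a2*(m2 - w3/w1))); last by ring.
      by rewrite ad bd; ring.
    by move/eqP: h; rewrite mulf_eq0 (negbTE detn) orbF => /eqP.
  have r1 : w1^-1 ^+ 2 = 1.
    rewrite -H1 -na; congr (_ ^+ 2 + _ ^+ 2); lra.
  have w1sq : w1 ^+ 2 = 1 by move: r1; rewrite exprVn => /eqP; rewrite invr_eq1 => /eqP.
  case: Hp => [[z1 [z2 [z3 [e1 [e2 e3]]]]]|[z1 [z2 [z3 [e1 [e2 e3]]]]]].
    by move: w1sq; rewrite e1 => /sq1; lia.
  move: w1sq; rewrite e1 => /sq1 hz.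
  have : z1 = 0 \/ z1 = -1 by nia.
  case=> hz1; rewrite hz1 in e1.
  + exists z2, z3; split.
      by rewrite (_ : m1 = w2 / w1); [rewrite e2 e1 !(intrD, intrM); field | lra].
    by rewrite (_ : m2 = w3 / w1); [rewrite e3 e1 !(intrD, intrM); field | lra].
  + exists (- z2 - 1), (- z3); split.
      by rewrite (_ : m1 = w2 / w1); [rewrite e2 e1 !(intrD, intrM, intrB, intrN); field | lra].
    by rewrite (_ : m2 = w3 / w1); [rewrite e3 e1 !(intrD, intrM, intrB, intrN); field | lra].
- move/negbFE/eqP: hb => hb.
  case: Hp => [[z1 [z2 [z3 [e1 [e2 e3]]]]]|[z1 [z2 [z3 [e1 [e2 e3]]]]]]; last first.
    have : ((2*z1+1)%:~R : R) != 0 by apply: intr_neq0; lia.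
    by rewrite -e1 hb eqxx.
  have w3n : w3 != 0 by rewrite e3; apply: intr_neq0; lia.
  have ha : w2*a1 + w3*a2 = 0 by lra.
  have hb' : w2*b1 + w3*b2 = 0 by lra.
  have : w3 * (a1*b2 - a2*b1) = 0.
    rewrite (_ : _ * _ = a1*(w2*b1 + w3*b2) - b1*(w2*a1 + w3*a2)); last by ring.
    by rewrite ha hb'; ring.
  by move/eqP; rewrite mulf_eq0 (negbTE w3n) (negbTE detn).
Qed.

Lemma mid (A A' m : R * R) : sqdist A m = 1 -> sqdist A' m = 1 -> sqdist A A' = 4 ->
  A' = (2 * m.1 - A.1, 2 * m.2 - A.2).
Proof.
case: A => x1 x2; case: A' => y1 y2; case: m => m1 m2; rewrite /sqdist /= => h1 h2 h3.
have h : (x1 + y1 - 2 * m1) ^+ 2 + (x2 + y2 - 2 * m2) ^+ 2 = 0 by lra.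
move/eqP: h; rewrite paddr_eq0 ?sqr_ge0 // !sqrf_eq0 => /andP [/eqP e1 /eqP e2].
by congr pair; lra.
Qed.

Lemma center_f (f : R * R -> R * R) (c1 c2 : R) (D : set (R * R)) :
  euclidean_motion f -> P (f @` D) ->
  D (c1 + 1, c2) -> D (c1 - 1, c2) -> D (c1, c2 + 1) -> D (c1, c2 - 1) ->
  exists a b : int, (f (c1, c2)).1 = (2*a+1)%:~R /\ (f (c1, c2)).2 = (2*b)%:~R.
Proof.
move=> Hf [U [i [HU HD]]] d1 d2 d3 d4.
have mem x : D x -> circle_of_row (row i (U *m W1)) (f x) by move=> Dx; rewrite -HD; exists x.
have hA : sqdist (f (c1 + 1, c2)) (f (c1, c2)) = 1 by rewrite Hf /sqdist /=; ring.
have hA' : sqdist (f (c1 - 1, c2)) (f (c1, c2)) = 1 by rewrite Hf /sqdist /=; ring.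
have hB : sqdist (f (c1, c2 + 1)) (f (c1, c2)) = 1 by rewrite Hf /sqdist /=; ring.
have hB' : sqdist (f (c1, c2 - 1)) (f (c1, c2)) = 1 by rewrite Hf /sqdist /=; ring.
have hAA : sqdist (f (c1 + 1, c2)) (f (c1 - 1, c2)) = 4 by rewrite Hf /sqdist /=; ring.
have hBB : sqdist (f (c1, c2 + 1)) (f (c1, c2 - 1)) = 4 by rewrite Hf /sqdist /=; ring.
have hAB : sqdist (f (c1 + 1, c2)) (f (c1, c2 + 1)) = 2 by rewrite Hf /sqdist /=; ring.
have eA := mid hA hA' hAA; have eB := mid hB hB' hBB.
move: (mem _ d1) (mem _ d2) (mem _ d3) (mem _ d4) hA hB hAB.
rewrite eA eB.
move: (f (c1 + 1, c2)) (f (c1, c2 + 1)) (f (c1, c2)) => [x1 x2] [y1 y2] [m1 m2] /=.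
move=> M1 M2 M3 M4; rewrite /sqdist /= => nA nB nAB.
apply: (@center_L _ _ _ (x1 - m1) (x2 - m2) (y1 - m1) (y2 - m2) (row_par i HU)).
- by rewrite nA.
- by rewrite nB.
- lra.
- by rewrite (_ : (_, _) = (x1, x2)) //; congr pair; ring.
- by rewrite (_ : (_, _) = (2 * m1 - x1, 2 * m2 - x2)) //; congr pair; ring.
- by rewrite (_ : (_, _) = (y1, y2)) //; congr pair; ring.
- by rewrite (_ : (_, _) = (2 * m1 - y1, 2 * m2 - y2)) //; congr pair; ring.
Qed.

Lemma no_vert (w : 'rV[R]_4) (K y s : R) : Par w ->
  circle_of_row w (K, y) -> circle_of_row w (K, y + s) -> circle_of_row w (K, y + 2 * s) ->
  s = 0.
Proof.
rewrite cor_def /Par.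
set w0 := w ord0 o0; set w1 := w ord0 o1; set w2 := w ord0 o2; set w3 := w ord0 o3.
case: ifP => hb Hp /= H1 H2 H3.
  have : s ^+ 2 = 0 by lra.
  by move/eqP; rewrite sqrf_eq0 => /eqP.
move/negbFE/eqP: hb => hb.
case: Hp => [[z1 [z2 [z3 [e1 [e2 e3]]]]]|[z1 [z2 [z3 [e1 [e2 e3]]]]]]; last first.
  have : ((2*z1+1)%:~R : R) != 0 by apply: intr_neq0; lia.
  by rewrite -e1 hb eqxx.
have w3n : w3 != 0 by rewrite e3; apply: intr_neq0; lia.
have : w3 * s = 0 by lra.
by move/eqP; rewrite mulf_eq0 (negbTE w3n) => /eqP.
Qed.

Lemma uniq3 (f h : R * R -> R * R) : euclidean_motion f -> euclidean_motion h ->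
  f (1, 0) = h (1, 0) -> f (3, 0) = h (3, 0) -> f (1, 2) = h (1, 2) ->
  ((h (3,0)).1 - (h (1,0)).1) * ((h (1,2)).2 - (h (1,0)).2)
   - ((h (3,0)).2 - (h (1,0)).2) * ((h (1,2)).1 - (h (1,0)).1) != 0 -> f = h.
Proof.
move=> Hf Hh E1 E2 E3 dn; apply: funext => x.
have s1 : sqdist (f x) (h (1,0)) = sqdist (h x) (h (1,0)) by rewrite -{1}E1 Hf Hh.
have s2 : sqdist (f x) (h (3,0)) = sqdist (h x) (h (3,0)) by rewrite -{1}E2 Hf Hh.
have s3 : sqdist (f x) (h (1,2)) = sqdist (h x) (h (1,2)) by rewrite -{1}E3 Hf Hh.
move: s1 s2 s3 dn.
move: (f x) (h x) (h (1,0)) (h (3,0)) (h (1,2)) => [q1 q2] [r1 r2] [p1 p2] [p3 p4] [p5 p6].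
rewrite /sqdist /= => s1 s2 s3 dn.
have ud : (q1 - r1)*(p3-p1) + (q2-r2)*(p4-p2) = 0 by lra.
have ue : (q1 - r1)*(p5-p1) + (q2-r2)*(p6-p2) = 0 by lra.
have u1 : (q1 - r1) * ((p3 - p1) * (p6 - p2) - (p4 - p2) * (p5 - p1)) = 0.
  rewrite (_ : _ * _ = (p6-p2) * ((q1 - r1)*(p3-p1) + (q2-r2)*(p4-p2)) - (p4-p2) * ((q1 - r1)*(p5-p1) + (q2-r2)*(p6-p2))); last by ring.
  by rewrite ud ue; ring.
have u2 : (q2 - r2) * ((p3 - p1) * (p6 - p2) - (p4 - p2) * (p5 - p1)) = 0.
  rewrite (_ : _ * _ = (p3-p1) * ((q1 - r1)*(p5-p1) + (q2-r2)*(p6-p2)) - (p5-p1) * ((q1 - r1)*(p3-p1) + (q2-r2)*(p4-p2))); last by ring.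
  by rewrite ud ue; ring.
move/eqP: u1; rewrite mulf_eq0 (negbTE dn) orbF subr_eq0 => /eqP ->.
move/eqP: u2; rewrite mulf_eq0 (negbTE dn) orbF subr_eq0 => /eqP ->.
by [].
Qed.
End Nec.

Section T.
Variable R : realType.
Local Notation P := (@std_superpacking R).
Lemma m10 (x y : R) : (x - 1)^+2 + y^+2 = 1 -> circle_of_row (row o2 (1%:M *m W1)) (x, y).
Proof.
rewrite mul1mx cor_def !mxE /= !mulr1z !mulr0z oner_neq0 /= => h.
by rewrite !divr1 subr0 invr1 expr1n.
Qed.
Lemma m0 (x : R) : circle_of_row (row o0 (1%:M *m W1)) (x, 1).
Proof. rewrite mul1mx cor_def !mxE /= !mulr1z !mulr0z eqxx /=; by field. Qed.

Lemma mg_comp (f g : R * R -> R * R) : motion_group f -> motion_group g -> motion_group (f \o g).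
Proof. elim=> [|a b Ha _ IH] Hg; first exact: Hg. exact: mg_gen Ha (IH Hg). Qed.
Lemma mg1 (g : R * R -> R * R) : motion_gen g -> motion_group g.
Proof. by move=> Hg; exact: mg_gen Hg mg_id. Qed.

Definition TXm (n : int) (p : R * R) : R * R := (p.1 + 2 * n%:~R, p.2).
Definition TYm (n : int) (p : R * R) : R * R := (p.1, p.2 + 2 * n%:~R).

Lemma mg_TXn (k : nat) : motion_group (TXm k%:Z) /\ motion_group (TXm (- k%:Z)).
Proof.
elim: k => [|k [IH1 IH2]].
  have -> : TXm 0 = id by apply: funext => -[x y]; rewrite /TXm /=; congr pair; ring.
  by split; exact: mg_id.
split.
  have -> : TXm k.+1%:Z = trans_x \o TXm k%:Z.
    by apply: funext => -[x y]; rewrite /TXm /trans_x /= intS intrD; congr pair; ring.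
  by apply: mg_gen IH1; left.
have -> : TXm (- k.+1%:Z) = trans_x_inv \o TXm (- k%:Z).
  by apply: funext => -[x y]; rewrite /TXm /trans_x_inv /= intS !intrN intrD; congr pair; ring.
by apply: mg_gen IH2; do 4 right; left.
Qed.
Lemma mg_TYn (k : nat) : motion_group (TYm k%:Z) /\ motion_group (TYm (- k%:Z)).
Proof.
elim: k => [|k [IH1 IH2]].
  have -> : TYm 0 = id by apply: funext => -[x y]; rewrite /TYm /=; congr pair; ring.
  by split; exact: mg_id.
split.
  have -> : TYm k.+1%:Z = trans_y \o TYm k%:Z.
    by apply: funext => -[x y]; rewrite /TYm /trans_y /= intS intrD; congr pair; ring.
  by apply: mg_gen IH1; right; left.
have -> : TYm (- k.+1%:Z) = trans_y_inv \o TYm (- k%:Z).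
  by apply: funext => -[x y]; rewrite /TYm /trans_y_inv /= intS !intrN intrD; congr pair; ring.
by apply: mg_gen IH2; do 5 right.
Qed.
Lemma mg_TX (n : int) : motion_group (TXm n).
Proof. case: n => k; first exact: (mg_TXn k).1. rewrite NegzE; exact: (mg_TXn k.+1).2. Qed.
Lemma mg_TY (n : int) : motion_group (TYm n).
Proof. case: n => k; first exact: (mg_TYn k).1. rewrite NegzE; exact: (mg_TYn k.+1).2. Qed.

Lemma mg_final (m n p q : int) : (p = 1 \/ p = -1) -> (q = 1 \/ q = -1) ->
  motion_group (fun x : R * R => ((2 * m + 1)%:~R + p%:~R * (x.1 - 1), (2*n)%:~R + q%:~R * x.2)).
Proof.
have grx : motion_group (@refl_x R) by apply: mg1; right; right; left.
have gry : motion_group (@refl_y R) by apply: mg1; do 3 right; left.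
case=> -> [] ->.
- rewrite (_ : (fun x => _) = TXm m \o TYm n); first exact: mg_comp (mg_TX _) (mg_TY _).
  by apply: funext => -[x y]; rewrite /TXm /TYm /=; congr pair; rewrite !(intrD, intrM); ring.
- rewrite (_ : (fun x => _) = TXm m \o TYm n \o refl_y).
    exact: mg_comp (mg_comp (mg_TX _) (mg_TY _)) gry.
  by apply: funext => -[x y]; rewrite /TXm /TYm /refl_y /=; congr pair; rewrite !(intrD, intrM); ring.
- rewrite (_ : (fun x => _) = TXm (m + 1) \o TYm n \o refl_x).
    exact: mg_comp (mg_comp (mg_TX _) (mg_TY _)) grx.
  by apply: funext => -[x y]; rewrite /TXm /TYm /refl_x /=; congr pair; rewrite !(intrD, intrM); ring.
- rewrite (_ : (fun x => _) = TXm (m + 1) \o TYm n \o refl_x \o refl_y).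
    exact: mg_comp (mg_comp (mg_comp (mg_TX _) (mg_TY _)) grx) gry.
  by apply: funext => -[x y]; rewrite /TXm /TYm /refl_x /refl_y /=; congr pair; rewrite !(intrD, intrM); ring.
Qed.
End T.

Lemma sq_int (R : realType) (p : int) : (p = 1 \/ p = -1) -> (p%:~R : R)^+2 = 1.
Proof. by case=> ->; ring. Qed.

Lemma iso_h (R : realType) (c1 c2 e d : R) : e^+2 = 1 -> d^+2 = 1 ->
  euclidean_motion (fun x : R * R => (c1 + e * (x.1 - 1), c2 + d * x.2)).
Proof.
move=> he hd x y; rewrite /sqdist /=.
rewrite (_ : (c1 + e * (x.1 - 1) - (c1 + e * (y.1 - 1)))^+2 = e^+2 * (x.1 - y.1)^+2); last by ring.
rewrite (_ : (c2 + d * x.2 - (c2 + d * y.2))^+2 = d^+2 * (x.2 - y.2)^+2); last by ring.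
by rewrite he hd !mul1r.
Qed.
Lemma iso_v (R : realType) (c1 c2 e d : R) : e^+2 = 1 -> d^+2 = 1 ->
  euclidean_motion (fun x : R * R => (c1 + d * x.2, c2 + e * (x.1 - 1))).
Proof.
move=> he hd x y; rewrite /sqdist /=.
rewrite (_ : (c1 + d * x.2 - (c1 + d * y.2))^+2 = d^+2 * (x.2 - y.2)^+2); last by ring.
rewrite (_ : (c2 + e * (x.1 - 1) - (c2 + e * (y.1 - 1)))^+2 = e^+2 * (x.1 - y.1)^+2); last by ring.
by rewrite he hd !mul1r addrC.
Qed.

Theorem theorem6p1 (R : realType) :
  (leaves_invariant (@trans_x R) /\ leaves_invariant (@trans_y R) /\
   leaves_invariant (@refl_x R) /\ leaves_invariant (@refl_y R)) /\
  (forall f : R * R -> R * R, euclidean_motion f ->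
     (leaves_invariant f <-> motion_group f)).
Proof.
split.
  split; [|split; [|split]]; apply: li_gen.
  - by left.
  - by right; left.
  - by right; right; left.
  - by do 3 right; left.
move=> f Hf; split; last exact: li_group.
move=> Hli.
have mi : maps_into f by move=> C PC; rewrite -Hli; exists C.
pose C10 := circle_of_row (row o2 (1%:M *m W1) : 'rV[R]_4).
have P10 : std_superpacking C10 by exists 1%:M, o2; split => //; exact: sA_one.
have [a1 [b1 [E1x E1y]]] := center_f (c1 := 1) (c2 := 0) Hf (mi _ P10)
  (ltac:(by apply: m10; ring)) (ltac:(by apply: m10; ring))
  (ltac:(by apply: m10; ring)) (ltac:(by apply: m10; ring)).
have [a2 [b2 [E2x E2y]]] := center_f (c1 := 3) (c2 := 0) Hf (mi _ (mi_tx P10))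
  (ltac:(by exists (1 + 1, 0); [apply: m10; ring | rewrite /trans_x /=; congr pair; ring]))
  (ltac:(by exists (1 - 1, 0); [apply: m10; ring | rewrite /trans_x /=; congr pair; ring]))
  (ltac:(by exists (1, 0 + 1); [apply: m10; ring | rewrite /trans_x /=; congr pair; ring]))
  (ltac:(by exists (1, 0 - 1); [apply: m10; ring | rewrite /trans_x /=; congr pair; ring])).
have [a3 [b3 [E3x E3y]]] := center_f (c1 := 1) (c2 := 2) Hf (mi _ (mi_ty P10))
  (ltac:(by exists (1 + 1, 0); [apply: m10; ring | rewrite /trans_y /=; congr pair; ring]))
  (ltac:(by exists (1 - 1, 0); [apply: m10; ring | rewrite /trans_y /=; congr pair; ring]))
  (ltac:(by exists (1, 0 + 1); [apply: m10; ring | rewrite /trans_y /=; congr pair; ring]))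
  (ltac:(by exists (1, 0 - 1); [apply: m10; ring | rewrite /trans_y /=; congr pair; ring])).
have i1 : (a2 - a1) * (a2 - a1) + (b2 - b1) * (b2 - b1) = 1.
  apply: (@intr_inj R); move: (Hf (3,0) (1,0)).
  rewrite /sqdist E2x E2y E1x E1y /= !(intrD, intrM, intrB) => h; lra.
have i2 : (a3 - a1) * (a3 - a1) + (b3 - b1) * (b3 - b1) = 1.
  apply: (@intr_inj R); move: (Hf (1,2) (1,0)).
  rewrite /sqdist E3x E3y E1x E1y /= !(intrD, intrM, intrB) => h; lra.
have i3 : ((a3 - a1) - (a2 - a1)) * ((a3 - a1) - (a2 - a1)) +
          ((b3 - b1) - (b2 - b1)) * ((b3 - b1) - (b2 - b1)) = 2.
  apply: (@intr_inj R); move: (Hf (1,2) (3,0)).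
  rewrite /sqdist E3x E3y E2x E2y /= !(intrD, intrM, intrB) => h; lra.
case: (int_cases i1 i2 i3) => [[hq [hp' [hp hq']]] | [hp [hq' [hq hp']]]].
- have he := sq_int R hp; have hd := sq_int R hq'.
  have fh : f = (fun x => ((2 * a1 + 1)%:~R + (a2 - a1)%:~R * (x.1 - 1),
                           (2 * b1)%:~R + (b3 - b1)%:~R * x.2)).
    apply: (uniq3 Hf (iso_h _ _ he hd)).
    + by rewrite [LHS]surjective_pairing E1x E1y /=; congr pair; ring.
    + rewrite [LHS]surjective_pairing E2x E2y /=; have -> : b2 = b1 by lia.
      by congr pair; rewrite !(intrD, intrM, intrB); ring.
    + rewrite [LHS]surjective_pairing E3x E3y /=; have -> : a3 = a1 by lia.
      by congr pair; rewrite !(intrD, intrM, intrB); ring.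
    + apply/eqP => h0; rewrite /= in h0; nra.
  by rewrite fh; apply: mg_final.
- have he := sq_int R hq; have hd := sq_int R hp'.
  have fh : f = (fun x => ((2 * a1 + 1)%:~R + (a3 - a1)%:~R * x.2,
                           (2 * b1)%:~R + (b2 - b1)%:~R * (x.1 - 1))).
    apply: (uniq3 Hf (iso_v _ _ he hd)).
    + by rewrite [LHS]surjective_pairing E1x E1y /=; congr pair; ring.
    + rewrite [LHS]surjective_pairing E2x E2y /=; have -> : a2 = a1 by lia.
      by congr pair; rewrite !(intrD, intrM, intrB); ring.
    + rewrite [LHS]surjective_pairing E3x E3y /=; have -> : b3 = b1 by lia.
      by congr pair; rewrite !(intrD, intrM, intrB); ring.
    + apply/eqP => h0; rewrite /= in h0; nra.
  pose C0 := circle_of_row (row o0 (1%:M *m W1) : 'rV[R]_4).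
  have P0 : std_superpacking C0 by exists 1%:M, o0; split => //; exact: sA_one.
  have [U [i [HU HD]]] := mi _ P0.
  have memf x : C0 x -> circle_of_row (row i (U *m W1)) (f x).
    by move=> Cx; rewrite -HD; exists x.
  have := @no_vert R _ ((2 * a1 + 1)%:~R + (a3 - a1)%:~R) ((2 * b1)%:~R - (b2 - b1)%:~R)
    ((b2 - b1)%:~R) (row_par i HU).
  move=> H; have h0 : ((b2 - b1)%:~R : R) = 0.
    apply: H.
    + by rewrite (_ : (_, _) = f (0, 1)); [exact: memf (m0 _) | rewrite fh /=; congr pair; ring].
    + by rewrite (_ : (_, _) = f (1, 1)); [exact: memf (m0 _) | rewrite fh /=; congr pair; ring].
    + by rewrite (_ : (_, _) = f (2, 1)); [exact: memf (m0 _) | rewrite fh /=; congr pair; ring].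
  by move: he; rewrite h0; lra.
Qed.
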